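(* Let $\mathbb J=\mathbb N\times(\mathbb N\cup\{\infty\})$ ordered by $(j,k)\le(m,n)$ iff either ($j=m$ and $k\le n$) or ($n=\infty$ and $k\le m$), and let $X=(\mathbb J,\sigma(\mathbb J))$ carry the Scott topology. Then $X$ is a $d$-space, $Q(X)=Q_s(X)$, and $X$ is neither well-filtered nor $s$-well-filtered. In particular, a $d$-space need not be $s$-well-filtered.
   Context: A subset $U$ of a poset is Scott open if it is an upper set and for every directed $D$ with existing supremum, $\bigvee D\in U$ implies $D\cap U\neq\emptyset$. A $T_0$ space is a $d$-space if it is a dcpo in its specialization order and every open set is Scott open. $Q(X)$: nonempty compact saturated sets; $Q_s(X)$: nonempty strongly compact saturated sets, where $A$ is strongly compact if for every open $U\supseteq A$ there is finite $F$ with $A\subseteq\uparrow F\subseteq U$. A family is filtered if nonempty and any two members contain a third. $X$ is well-filtered (resp. $s$-well-filtered) if for every open $U$ and filtered $\mathcal K\subseteq Q(X)$ (resp. $\subseteq Q_s(X)$), $\bigcap\mathcal K\subseteq U$ implies $K\subseteq U$ for some $K\in\mathcal K$. *)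

(* Defs.v *)
From Stdlib Require Import List Arith.

Definition pset (T : Type) := T -> Prop.

Section Order.
Variable (T : Type) (le : T -> T -> Prop).

Definition upper_set (U : pset T) : Prop :=
  forall x y, U x -> le x y -> U y.

Definition directed (D : pset T) : Prop :=
  (exists d, D d) /\
  forall a b, D a -> D b -> exists c, D c /\ le a c /\ le b c.

Definition is_sup (D : pset T) (s : T) : Prop :=
  (forall d, D d -> le d s) /\
  (forall u, (forall d, D d -> le d u) -> le s u).

Definition scott_open (U : pset T) : Prop :=
  upper_set U /\
  forall D s, directed D -> is_sup D s -> U s -> exists d, D d /\ U d.

Definition dcpo : Prop :=
  forall D, directed D -> exists s, is_sup D s.
End Order.

Section Top.
Variable (T : Type) (O : pset (pset T)).

Definition subset (A B : pset T) : Prop := forall x, A x -> B x.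

Definition spec (x y : T) : Prop := forall U, O U -> U x -> U y.

Definition T0 : Prop := forall x y, spec x y -> spec y x -> x = y.

Definition d_space : Prop :=
  T0 /\ dcpo T spec /\ forall U, O U -> scott_open T spec U.

Definition up_list (F : list T) : pset T :=
  fun y => exists x, In x F /\ spec x y.

Definition compact (A : pset T) : Prop :=
  forall C : pset (pset T),
    (forall U, C U -> O U) ->
    (forall x, A x -> exists U, C U /\ U x) ->
    exists l : list (pset T),
      (forall U, In U l -> C U) /\ (forall x, A x -> exists U, In U l /\ U x).

Definition saturated (A : pset T) : Prop :=
  forall x, (forall U, O U -> subset A U -> U x) -> A x.

Definition strongly_compact (A : pset T) : Prop :=
  forall U, O U -> subset A U ->
    exists F : list T, subset A (up_list F) /\ subset (up_list F) U.

Definition inQ (A : pset T) : Prop :=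
  (exists x, A x) /\ compact A /\ saturated A.

Definition inQs (A : pset T) : Prop :=
  (exists x, A x) /\ strongly_compact A /\ saturated A.

Definition filtered (K : pset (pset T)) : Prop :=
  (exists A, K A) /\
  forall A B, K A -> K B -> exists C, K C /\ subset C A /\ subset C B.

Definition bigcap (K : pset (pset T)) : pset T := fun x => forall A, K A -> A x.

Definition well_filtered : Prop :=
  forall U (K : pset (pset T)), O U -> (forall A, K A -> inQ A) -> filtered K ->
    subset (bigcap K) U -> exists A, K A /\ subset A U.

Definition s_well_filtered : Prop :=
  forall U (K : pset (pset T)), O U -> (forall A, K A -> inQs A) -> filtered K ->
    subset (bigcap K) U -> exists A, K A /\ subset A U.
End Top.

(* ---------- The poset J = N x (N ∪ {∞}); None stands for ∞ ---------- *)
Definition J := (nat * option nat)%type.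

Definition le_inf (k n : option nat) : Prop :=
  match k, n with
  | _, None => True
  | Some a, Some b => a <= b
  | None, Some _ => False
  end.

Definition leJ (a b : J) : Prop :=
  let (j, k) := a in let (m, n) := b in
  (j = m /\ le_inf k n) \/ (n = None /\ le_inf k (Some m)).

Definition scottJ : pset (pset J) := scott_open J leJ.

(* Main.v *)
Require Import Defs.
From Stdlib Require Import List Arith Lia Classical FunctionalExtensionality PropExtensionality.

Lemma leJ_refl : forall x, leJ x x.
Proof. intros [j [k|]]; simpl; left; split; auto. Qed.

Lemma leJ_trans : forall x y z, leJ x y -> leJ y z -> leJ x z.
Proof.
  intros [a k] [b l] [c m]; simpl.
  destruct k as [k|], l as [l|], m as [m|]; simpl;
  intros H1 H2; intuition (subst; try discriminate; auto; try lia).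
Qed.

Lemma leJ_antisym : forall x y, leJ x y -> leJ y x -> x = y.
Proof.
  intros [a k] [b l]; simpl.
  destruct k as [k|], l as [l|]; simpl;
  intros H1 H2; intuition (subst; try discriminate; auto; try lia; try contradiction).
  f_equal; f_equal; lia.
Qed.

Lemma le_fin_inv : forall x p b, leJ x (p, Some b) -> exists a, x = (p, Some a) /\ a <= b.
Proof.
  intros [a [k|]] p b; simpl; intuition (subst; try discriminate; try contradiction).
  eauto.
Qed.

Lemma le_max_inv : forall p y, leJ (p, None) y -> y = (p, None).
Proof.
  intros p [b [l|]]; simpl; intuition (subst; try discriminate; try contradiction; auto).
Qed.

Lemma same_col : forall D, directed J leJ D -> (forall d, D d -> exists a k, d = (a, Some k)) ->
  forall a k b l, D (a, Some k) -> D (b, Some l) -> a = b.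
Proof.
  intros D [_ Hd] Hf a k b l H1 H2.
  destruct (Hd _ _ H1 H2) as [c [Hc [L1 L2]]].
  destruct (Hf c Hc) as [c1 [x ->]].
  destruct (le_fin_inv _ _ _ L1) as [? [E1 _]].
  destruct (le_fin_inv _ _ _ L2) as [? [E2 _]].
  congruence.
Qed.

Lemma sup_lemma : forall D s, directed J leJ D -> is_sup J leJ D s ->
  D s \/ exists q, s = (q, None) /\ forall n, exists k, n <= k /\ D (q, Some k).
Proof.
  intros D s Hdir [Hub Hlub].
  destruct (classic (D s)) as [Hs|Hs]; [left; auto|right].
  destruct s as [q [m|]].
  - exfalso.
    destruct (classic (exists d, D d /\ d = (q, Some m))) as [[d [Hd ->]]|Hn].
    + contradiction.
    + destruct Hdir as [[d0 Hd0] _].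
      destruct (le_fin_inv _ _ _ (Hub _ Hd0)) as [a0 [-> Ha0]].
      assert (Hub2 : forall d, D d -> leJ d (q, Some (m - 1))).
      { intros d Hd. destruct (le_fin_inv _ _ _ (Hub _ Hd)) as [a [-> Ha]].
        simpl. left. split; auto. simpl.
        assert (a <> m) by (intro; subst; apply Hn; eauto). lia. }
      specialize (Hlub _ Hub2). simpl in Hlub.
      destruct Hlub as [[_ H]|[H _]]; [simpl in H|discriminate].
      assert (a0 <> m) by (intro; subst; apply Hn; eauto). lia.
  - exists q. split; auto.
    assert (Hfin : forall d, D d -> exists a k, d = (a, Some k)).
    { intros [a [k|]] Hd; eauto.
      pose proof (Hub _ Hd) as H. apply le_max_inv in H. inversion H; subst. contradiction. }
    destruct Hdir as [[d0 Hd0] Hd'] eqn:Edir.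
    destruct (Hfin _ Hd0) as [c [k0 ->]].
    assert (Hcol : forall d, D d -> exists k, d = (c, Some k)).
    { intros d Hd. destruct (Hfin _ Hd) as [a [k ->]].
      pose proof (same_col D Hdir Hfin _ _ _ _ Hd Hd0). subst; eauto. }
    assert (c = q).
    { assert (Hb : forall d, D d -> leJ d (c, None)).
      { intros d Hd. destruct (Hcol _ Hd) as [k ->]. simpl. auto. }
      specialize (Hlub _ Hb). apply le_max_inv in Hlub. congruence. }
    subst c.
    apply NNPP; intro Hn.
    apply not_all_ex_not in Hn. destruct Hn as [n Hn].
    assert (Hb : forall d, D d -> leJ d (q, Some n)).
    { intros d Hd. destruct (Hcol _ Hd) as [k ->]. simpl. left; split; auto; simpl.
      destruct (le_lt_dec k n); auto. exfalso; apply Hn; exists k; split; auto; lia. }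
    specialize (Hlub _ Hb). simpl in Hlub. intuition (try discriminate; try contradiction).
Qed.

Definition upperJ (U : pset J) := upper_set J leJ U.
Definition witJ (U : pset J) := forall q, U (q, None) -> exists n, U (q, Some n).

Lemma col_directed : forall q, directed J leJ (fun x => exists k, x = (q, Some k)).
Proof.
  intros q. split; [exists (q, Some 0); eauto|].
  intros a b [k ->] [l ->]. exists (q, Some (Nat.max k l)). split; eauto.
  simpl; split; left; split; auto; simpl; lia.
Qed.

Lemma col_sup : forall q, is_sup J leJ (fun x => exists k, x = (q, Some k)) (q, None).
Proof.
  intros q. split.
  - intros d [k ->]; simpl; auto.
  - intros [p [b|]] H.
    + specialize (H (q, Some (S b)) (ex_intro _ _ eq_refl)). simpl in H.
      intuition (try discriminate; simpl in *; lia).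
    + destruct (Nat.eq_dec p q) as [->|Hne]; [apply leJ_refl|].
      specialize (H (q, Some (S p)) (ex_intro _ _ eq_refl)). simpl in H.
      intuition (try discriminate; simpl in *; lia).
Qed.

Lemma open_iff : forall U, scottJ U <-> (upperJ U /\ witJ U).
Proof.
  intros U. split.
  - intros [Hu Hs]. split; auto. intros q Hq.
    destruct (Hs _ _ (col_directed q) (col_sup q) Hq) as [d [[k ->] Hd]]. eauto.
  - intros [Hu Hw]. split; auto.
    intros D s Hdir Hsup Hs.
    destruct (sup_lemma D s Hdir Hsup) as [HD|[q [-> Hc]]]; [eauto|].
    destruct (Hw _ Hs) as [n Hn]. destruct (Hc n) as [k [Hk HD]].
    exists (q, Some k). split; auto. apply (Hu _ _ Hn). simpl. left; split; auto.
Qed.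

Lemma notdown_open : forall y, scottJ (fun z => ~ leJ z y).
Proof.
  intros y. apply open_iff. split.
  - intros a b Ha Hab Hb. apply Ha. eapply leJ_trans; eauto.
  - intros q Hq. destruct y as [p [b|]].
    + exists (S b). simpl. intuition (try discriminate; simpl in *; lia).
    + exists (S p). simpl. intros H. apply Hq. simpl.
      intuition (try discriminate; simpl in *; subst; auto; lia).
Qed.

Lemma spec_eq : spec J scottJ = leJ.
Proof.
  apply functional_extensionality; intro x.
  apply functional_extensionality; intro y.
  apply propositional_extensionality. split.
  - intros H. apply NNPP; intro Hn.
    apply (H _ (notdown_open y) Hn). apply leJ_refl.
  - intros H U HU Ux. destruct HU as [Hu _]. eapply Hu; eauto.
Qed.

Lemma max_exists : forall (P : nat -> Prop) n, (forall k, P k -> k < n) -> (exists k, P k) ->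
  exists k, P k /\ forall k', P k' -> k' <= k.
Proof.
  intros P n. induction n as [|n IH]; intros Hb [k Hk].
  - specialize (Hb _ Hk). lia.
  - destruct (classic (P n)) as [Hn|Hn].
    + exists n. split; auto. intros k' Hk'. specialize (Hb _ Hk'). lia.
    + apply IH; eauto. intros k' Hk'. specialize (Hb _ Hk').
      assert (k' <> n) by (intro; subst; contradiction). lia.
Qed.

Lemma min_exists : forall (P : nat -> Prop), (exists k, P k) ->
  exists k, P k /\ forall k', P k' -> k <= k'.
Proof.
  intros P [n Hn]. revert Hn. induction n as [n IH] using lt_wf_ind. intros Hn.
  destruct (classic (exists m, m < n /\ P m)) as [[m [Hm Pm]]|Hno].
  - eauto.
  - exists n. split; auto. intros k' Hk'. destruct (le_lt_dec n k'); auto.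
    exfalso; eauto.
Qed.

Lemma dcpoJ : dcpo J leJ.
Proof.
  intros D Hdir.
  destruct (classic (exists p, D (p, None))) as [[p Hp]|Hnm].
  - exists (p, None). split.
    + intros d Hd. destruct Hdir as [_ Hd'].
      destruct (Hd' _ _ Hp Hd) as [c [_ [L1 L2]]].
      apply le_max_inv in L1. subst. auto.
    + intros u Hu. apply Hu. auto.
  - assert (Hfin : forall d, D d -> exists a k, d = (a, Some k)).
    { intros [a [k|]] Hd; eauto. exfalso; eauto. }
    pose proof Hdir as [[d0 Hd0] _].
    destruct (Hfin _ Hd0) as [c [k0 ->]].
    assert (Hcol : forall d, D d -> exists k, d = (c, Some k)).
    { intros d Hd. destruct (Hfin _ Hd) as [a [k ->]].
      pose proof (same_col D Hdir Hfin _ _ _ _ Hd Hd0). subst; eauto. }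
    destruct (classic (forall n, exists k, n <= k /\ D (c, Some k))) as [Hunb|Hb].
    + exists (c, None). split.
      * intros d Hd. destruct (Hcol _ Hd) as [k ->]. simpl; auto.
      * intros [p [b|]] Hu.
        -- destruct (Hunb (S b)) as [k [Hk HD]]. specialize (Hu _ HD). simpl in Hu.
           intuition (try discriminate; simpl in *; lia).
        -- destruct (Nat.eq_dec p c) as [->|Hne]; [apply leJ_refl|].
           destruct (Hunb (S p)) as [k [Hk HD]]. specialize (Hu _ HD). simpl in Hu.
           intuition (try discriminate; simpl in *; lia).
    + apply not_all_ex_not in Hb. destruct Hb as [n Hn].
      destruct (max_exists (fun k => D (c, Some k)) n) as [m [Hm Hmax]].
      { intros k Hk. destruct (le_lt_dec n k); auto. exfalso; apply Hn; eauto. }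
      { eauto. }
      exists (c, Some m). split.
      * intros d Hd. destruct (Hcol _ Hd) as [k ->]. simpl. left; split; auto.
        
      * intros u Hu. auto.
Qed.

Theorem dspace : d_space J scottJ.
Proof.
  unfold d_space, T0. rewrite spec_eq. split; [|split].
  - apply leJ_antisym.
  - apply dcpoJ.
  - intros U HU. exact HU.
Qed.

Lemma sat_iff : forall A, saturated J scottJ A <-> upperJ A.
Proof.
  intros A. split.
  - intros Hs x y Hx Hxy. apply Hs. intros U HU Hsub.
    destruct HU as [Hu _]. eapply Hu; eauto.
  - intros Hu x Hx. apply NNPP; intro Hn.
    apply (Hx _ (notdown_open x)).
    + intros a Ha Hax. apply Hn. eapply Hu; eauto.
    + apply leJ_refl.
Qed.

Lemma sc_compact : forall A, strongly_compact J scottJ A -> compact J scottJ A.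
Proof.
  intros A Hsc C HC Hcov.
  set (U := fun x => exists V, C V /\ V x).
  assert (HU : scottJ U).
  { apply open_iff. split.
    - intros x y [V [HV Vx]] Hxy. exists V; split; auto.
      destruct (HC _ HV) as [Hu _]. eapply Hu; eauto.
    - intros q [V [HV Vq]]. destruct (proj1 (open_iff V) (HC _ HV)) as [_ Hw].
      destruct (Hw _ Vq) as [n Hn]. exists n, V; auto. }
  destruct (Hsc U HU Hcov) as [F [H1 H2]].
  unfold up_list in *. rewrite spec_eq in *.
  assert (Hl : forall F', (forall x, In x F' -> U x) ->
     exists l, (forall V, In V l -> C V) /\ forall x, In x F' -> exists V, In V l /\ V x).
  { induction F' as [|x F' IH]; intros HF.
    - exists nil. split; simpl; tauto.
    - destruct IH as [l [Hl1 Hl2]]. { intros; apply HF; simpl; auto. }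
      destruct (HF x (or_introl eq_refl)) as [V [HV Vx]].
      exists (V :: l). split.
      + intros W [<-|HW]; auto.
      + intros y [<-|Hy]; [exists V; simpl; auto|].
        destruct (Hl2 _ Hy) as [W [HW Wy]]. exists W; simpl; auto. }
  destruct (Hl F) as [l [Hl1 Hl2]].
  { intros x Hx. apply H2. exists x. split; auto. apply leJ_refl. }
  exists l. split; auto.
  intros a Ha. destruct (H1 _ Ha) as [x [Hx Hxa]].
  destruct (Hl2 _ Hx) as [V [HV Vx]]. exists V. split; auto.
  destruct (HC _ (Hl1 _ HV)) as [Hu _]. eapply Hu; eauto.
Qed.

Lemma build_F0 : forall K : pset J, forall js : list nat,
  exists F0, (forall x, In x F0 -> K x) /\
    forall q, In q js -> forall n, K (q, Some n) -> exists x, In x F0 /\ leJ x (q, Some n).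
Proof.
  intros K js. induction js as [|q js IH].
  - exists nil. split; simpl; tauto.
  - destruct IH as [F [H1 H2]].
    destruct (classic (exists n, K (q, Some n))) as [Hq|Hq].
    + destruct (min_exists _ Hq) as [m [Hm Hmin]].
      exists ((q, Some m) :: F). split.
      * intros x [<-|Hx]; auto.
      * intros q' [->|Hq'] n Hn.
        -- exists (q', Some m). split; simpl; auto.
        -- destruct (H2 _ Hq' _ Hn) as [x [? ?]]. exists x; simpl; auto.
    + exists F. split; auto. intros q' [->|Hq'] n Hn; eauto.
      exfalso; eauto.
Qed.

Lemma build_L : forall K : pset J, forall k,
  exists L, (forall x, In x L -> K x) /\ forall p, p < k -> K (p, None) -> In (p, None) L.
Proof.
  intros K k. induction k as [|k IH].
  - exists nil. split; simpl; [tauto|intros; lia].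
  - destruct IH as [L [H1 H2]].
    destruct (classic (K (k, None))) as [Hk|Hk].
    + exists ((k, None) :: L). split.
      * intros x [<-|Hx]; auto.
      * intros p Hp Kp. destruct (Nat.eq_dec p k) as [->|]; simpl; auto.
        right; apply H2; auto; lia.
    + exists L. split; auto. intros p Hp Kp. destruct (Nat.eq_dec p k) as [->|]; [contradiction|].
      apply H2; auto; lia.
Qed.

Lemma sc_of_cols : forall K, upperJ K ->
  (exists js, forall q n, K (q, Some n) -> In q js) -> strongly_compact J scottJ K.
Proof.
  intros K Hu [js Hjs] U HU Hsub.
  pose proof HU as HU'. apply open_iff in HU' as [HUu HUw].
  unfold up_list, subset in *. rewrite spec_eq.
  destruct (build_F0 K js) as [F0 [F1 F2]].
  assert (Hgen : forall F, (forall x, In x F -> U x) ->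
    (forall y, (exists x, In x F /\ leJ x y) -> U y)).
  { intros F HF y [x [Hx Hxy]]. eapply HUu; eauto. }
  destruct (classic (exists j, K (j, None))) as [[j Hj]|Hnj].
  - destruct (HUw j (Hsub _ Hj)) as [k Hk].
    destruct (build_L K k) as [L [L1 L2]].
    exists ((j, Some k) :: L ++ F0). split.
    + intros [q [n|]] Hx.
      * destruct (F2 q (Hjs _ _ Hx) n Hx) as [x [? ?]]. exists x. split; auto.
        simpl; right; apply in_or_app; auto.
      * destruct (le_lt_dec k q).
        -- exists (j, Some k). split; simpl; auto.
        -- exists (q, None). split; [simpl; right; apply in_or_app; auto|apply leJ_refl].
    + apply Hgen. intros x [<-|Hx]; auto. apply in_app_or in Hx as [Hx|Hx]; auto.
  - exists F0. split.
    + intros [q [n|]] Hx.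
      * destruct (F2 q (Hjs _ _ Hx) n Hx) as [x [? ?]]. eauto.
      * exfalso; eauto.
    + apply Hgen. auto.
Qed.

Definition W (K : pset J) (j : nat) : pset J := fun x =>
  match x with
  | (q, None) => True
  | (q, Some n) => (forall m, ~ K (q, Some m)) \/ (q = j /\ K (q, Some n)) \/
                   exists n', n = S n' /\ K (q, Some n')
  end.

Lemma W_open : forall K j, upperJ K -> scottJ (W K j).
Proof.
  intros K j Hu. apply open_iff. split.
  - intros x [p [b|]] Hx Hxy; [|simpl; auto].
    destruct (le_fin_inv _ _ _ Hxy) as [a [-> Hab]].
    simpl in *. destruct Hx as [H|[[-> H]|[n' [-> H]]]].
    + left; auto.
    + right; left; split; auto. eapply Hu; eauto.
    + right; right. exists (b - 1). split; [lia|]. eapply Hu; eauto.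
      simpl; left; split; auto; simpl; lia.
  - intros q _. destruct (classic (exists m, K (q, Some m))) as [[m Hm]|Hn].
    + exists (S m). simpl. right; right; eauto.
    + exists 0. simpl. left. intros m Hm; eauto.
Qed.

Lemma compact_cols : forall K, upperJ K -> compact J scottJ K ->
  exists js, forall q n, K (q, Some n) -> In q js.
Proof.
  intros K Hu Hc.
  destruct (Hc (fun V => exists j, V = W K j)) as [l [Hl1 Hl2]].
  { intros U [j ->]. apply W_open; auto. }
  { intros [q [n|]] Hx.
    - exists (W K q). split; eauto. simpl. right; left; auto.
    - exists (W K 0). split; eauto. simpl; auto. }
  assert (Hjs : forall l, (forall V, In V l -> exists j, V = W K j) ->
     exists js, forall x, (exists V, In V l /\ V x) -> exists j, In j js /\ W K j x).
  { induction l0 as [|V l0 IH]; intros H.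
    - exists nil. intros x [V [[] _]].
    - destruct IH as [js Hjs]. { intros; apply H; simpl; auto. }
      destruct (H V (or_introl eq_refl)) as [j ->].
      exists (j :: js). intros x [V [[<-|HV] Vx]].
      + exists j; simpl; auto.
      + destruct (Hjs x (ex_intro _ V (conj HV Vx))) as [j' [? ?]]. exists j'; simpl; auto. }
  destruct (Hjs l Hl1) as [js Hjs'].
  exists js. intros q n. revert q. induction n as [|n IH]; intros q Hx.
  - destruct (Hjs' _ (Hl2 _ Hx)) as [j [Hj Wj]]. simpl in Wj.
    destruct Wj as [H|[[-> _]|[n' [H _]]]]; [exfalso; eapply H; eauto|auto|discriminate].
  - destruct (Hjs' _ (Hl2 _ Hx)) as [j [Hj Wj]]. simpl in Wj.
    destruct Wj as [H|[[-> _]|[n' [H H']]]]; [exfalso; eapply H; eauto|auto|].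
    injection H as ->. auto.
Qed.

Lemma Q_iff : forall A, inQ J scottJ A <-> inQs J scottJ A.
Proof.
  intros A. unfold inQ, inQs. split; intros [Hn [Hc Hs]]; split; auto; split; auto.
  - apply sat_iff in Hs. apply sc_of_cols; auto. apply compact_cols; auto.
  - apply sc_compact; auto.
Qed.

Definition Kn (n : nat) : pset J := fun x =>
  match x with (p, None) => n <= p | _ => False end.

Lemma Kn_upper : forall n, upperJ (Kn n).
Proof.
  intros n [p [a|]] y H Hy; simpl in H; [contradiction|].
  apply le_max_inv in Hy. subst. auto.
Qed.

Lemma Kn_Qs : forall n, inQs J scottJ (Kn n).
Proof.
  intros n. split; [exists (n, None); simpl; auto|split].
  - apply sc_of_cols; [apply Kn_upper|]. exists nil. intros q m H; destruct H.
  - apply sat_iff, Kn_upper.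
Qed.

Lemma not_wf_gen : forall (P : pset J -> Prop), (forall n, P (Kn n)) ->
  ~ (forall U (K : pset (pset J)), scottJ U -> (forall A, K A -> P A) -> filtered J K ->
    subset J (bigcap J K) U -> exists A, K A /\ subset J A U).
Proof.
  intros P HP H.
  destruct (H (fun _ => False) (fun A => exists n, A = Kn n)) as [A [[n ->] Hs]].
  - apply open_iff. split; [intros x y []|intros q []].
  - intros A [n ->]; auto.
  - split; [exists (Kn 0); eauto|].
    intros A B [a ->] [b ->]. exists (Kn (Nat.max a b)). split; [eauto|].
    split; intros [p [c|]] Hx; simpl in *; auto; lia.
  - intros [p k] Hx. specialize (Hx (Kn (S p)) (ex_intro _ _ eq_refl)).
    destruct k; simpl in Hx; auto; lia.
  - apply (Hs (n, None)). simpl; auto.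
Qed.

Theorem mainTheorem3 :
  d_space J scottJ /\
  (forall A : pset J, inQ J scottJ A <-> inQs J scottJ A) /\
  ~ well_filtered J scottJ /\
  ~ s_well_filtered J scottJ.
Proof.
  split; [apply dspace|split; [apply Q_iff|split]].
  - apply (not_wf_gen (inQ J scottJ)). intros n. apply Q_iff, Kn_Qs.
  - apply (not_wf_gen (inQs J scottJ)). apply Kn_Qs.
Qed.
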